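(* Let $\mathcal R$ be either the category of topological rings with continuous ring homomorphisms, or its full subcategory of f-adic rings. Let $\varphi:R\to A$ and $\psi:R\to B$ be arrows of $\mathcal R$. If $(T,f,g)$ is a tensor product of $(\varphi,\psi)$ in $\mathcal R$, then the induced ring homomorphism $A\otimes_R B\to T$ from the ring-theoretic tensor product is bijective.
   Context: All rings are commutative with unity. For arrows $\varphi:R\to A$, $\psi:R\to B$ in a category $\mathcal R$, a tensor product (pushout) is a triple $(T,f,g)$ with $T$ an object and arrows $f:A\to T$, $g:B\to T$ with $f\circ\varphi=g\circ\psi$, such that for any object $C$ and arrows $f':A\to C$, $g':B\to C$ with $f'\circ\varphi=g'\circ\psi$ there is a unique arrow $\theta:T\to C$ with $f'=\theta\circ f$, $g'=\theta\circ g$. An f-adic ring is a topological ring with an open subring $A_0$ and finitely generated ideal $I_0\subset A_0$ such that $\{I_0^n\}$ is a fundamental system of neighbourhoods of $0$. *)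

(* Defs.v *)
From HB Require Import structures.
From mathcomp Require Import all_boot all_order all_algebra.
Set Implicit Arguments. Unset Strict Implicit. Unset Printing Implicit Defensive.
Import Order.TTheory GRing.Theory Num.Theory.
Local Open Scope ring_scope.

(* Open sets are predicates on the carrier.  The zero ring is allowed.  *)
(* Continuity of the binary operations is w.r.t. the product topology,  *)
(* written pointwise with basic product neighbourhoods V x W.           *)
Record TopRing := {
  tr_car :> comPzRingType;
  tr_open : (tr_car -> Prop) -> Prop;
  tr_open_full : tr_open (fun _ => True);
  tr_open_union : forall F : (tr_car -> Prop) -> Prop,
      (forall U, F U -> tr_open U) -> tr_open (fun x => exists U, F U /\ U x);
  tr_open_inter : forall U V, tr_open U -> tr_open V ->
      tr_open (fun x => U x /\ V x);
  tr_add_cont : forall (x y : tr_car) U, tr_open U -> U (x + y) ->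
      exists V W, [/\ tr_open V, tr_open W, V x, W y &
                   forall v w, V v -> W w -> U (v + w)];
  tr_opp_cont : forall (x : tr_car) U, tr_open U -> U (- x) ->
      exists V, [/\ tr_open V, V x & forall v, V v -> U (- v)];
  tr_mul_cont : forall (x y : tr_car) U, tr_open U -> U (x * y) ->
      exists V W, [/\ tr_open V, tr_open W, V x, W y &
                   forall v w, V v -> W w -> U (v * w)]
}.

Definition is_ringhom (X Y : comPzRingType) (h : X -> Y) : Prop :=
  [/\ h 1 = 1, forall x y, h (x + y) = h x + h y & forall x y, h (x * y) = h x * h y].

Definition is_continuous (X Y : TopRing) (h : X -> Y) : Prop :=
  forall U, tr_open U -> tr_open (fun x => U (h x)).

Definition is_arrow (X Y : TopRing) (h : X -> Y) : Prop :=
  is_ringhom h /\ is_continuous h.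

Definition is_subring (X : comPzRingType) (S : X -> Prop) : Prop :=
  [/\ S 1, forall x y, S x -> S y -> S (x - y) & forall x y, S x -> S y -> S (x * y)].

(* n-th power I0^n of the ideal I0 of A0 generated by the finite list s:
   the A0-linear combinations of products of n elements of s
   (for n = 0 this is A0 itself). *)
Definition monomial (X : comPzRingType) (s : seq X) (n : nat) (m : X) : Prop :=
  exists t : seq X, [/\ size t = n, forall y, y \in t -> y \in s &
                        m = \prod_(y <- t) y].

Definition ideal_pow (X : comPzRingType) (A0 : X -> Prop) (s : seq X) (n : nat)
  (x : X) : Prop :=
  exists l : seq (X * X),
    (forall p, p \in l -> A0 p.1 /\ monomial s n p.2) /\
    x = \sum_(p <- l) p.1 * p.2.

Definition is_fadic (X : TopRing) : Prop :=
  exists (A0 : X -> Prop) (s : seq X),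
    [/\ is_subring A0, tr_open A0, (forall y, y \in s -> A0 y),
        (forall n, exists U, [/\ tr_open U, U 0 & forall x, U x -> ideal_pow A0 s n x])
      &
        (forall U, tr_open U -> U 0 ->
           exists n, forall x, ideal_pow A0 s n x -> U x)].

Definition inCat (fadic_only : bool) (X : TopRing) : Prop :=
  if fadic_only then is_fadic X else True.

Definition is_pushout (fadic_only : bool) (R A B : TopRing)
  (phi : R -> A) (psi : R -> B) (T : TopRing) (f : A -> T) (g : B -> T) : Prop :=
  [/\ inCat fadic_only T, is_arrow f, is_arrow g,
      (forall r, f (phi r) = g (psi r)) &
      forall (C : TopRing) (f' : A -> C) (g' : B -> C),
        inCat fadic_only C -> is_arrow f' -> is_arrow g' ->
        (forall r, f' (phi r) = g' (psi r)) ->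
        (exists theta : T -> C, [/\ is_arrow theta,
            (forall a, f' a = theta (f a)) & (forall b, g' b = theta (g b))]) /\
        (forall theta1 theta2 : T -> C,
            is_arrow theta1 -> (forall a, f' a = theta1 (f a)) -> (forall b, g' b = theta1 (g b)) ->
            is_arrow theta2 -> (forall a, f' a = theta2 (f a)) -> (forall b, g' b = theta2 (g b)) ->
            forall t, theta1 t = theta2 t)].

(* The ring-theoretic tensor product A (x)_R B, as an abelian group     *)
(* (its underlying set): the free abelian group Z[A x B] modulo the     *)
(* subgroup generated by the bilinearity and R-balancedness relations.  *)
(* Elements of Z[A x B] are represented by formal sums                  *)
(* [:: (n_i, a_i, b_i)] = sum n_i (a_i, b_i).                           *)
Definition fsum (A B : comPzRingType) := seq (int * A * B).

Definition fcoef (A B : comPzRingType) (l : fsum A B) (a : A) (b : B) : int :=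
  \sum_(p <- l | (p.1.2 == a) && (p.2 == b)) p.1.1.

Definition fscale (A B : comPzRingType) (n : int) (l : fsum A B) : fsum A B :=
  [seq (n * p.1.1, p.1.2, p.2) | p <- l].

Definition is_tensor_rel (R A B : comPzRingType) (phi : R -> A) (psi : R -> B)
  (l : fsum A B) : Prop :=
  (exists a a' b, l = [:: (1, a + a', b); (-1, a, b); (-1, a', b)]) \/
  (exists a b b', l = [:: (1, a, b + b'); (-1, a, b); (-1, a, b')]) \/
  (exists r a b, l = [:: (1, phi r * a, b); (-1, a, psi r * b)]).

(* l1 and l2 represent the same element of A (x)_R B. *)
Definition tensor_eqv (R A B : comPzRingType) (phi : R -> A) (psi : R -> B)
  (l1 l2 : fsum A B) : Prop :=
  exists rs : seq (int * fsum A B),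
    (forall p, p \in rs -> is_tensor_rel phi psi p.2) /\
    forall a b, fcoef l1 a b - fcoef l2 a b =
                fcoef (flatten [seq fscale p.1 p.2 | p <- rs]) a b.

Definition tensor_induced (A B T : comPzRingType) (f : A -> T) (g : B -> T)
  (l : fsum A B) : T :=
  \sum_(p <- l) (f p.1.2 * g p.2) *~ p.1.1.

Definition tensor_induced_bijective (R A B T : comPzRingType)
  (phi : R -> A) (psi : R -> B) (f : A -> T) (g : B -> T) : Prop :=
  (forall t : T, exists l, tensor_induced f g l = t) /\
  (forall l1 l2, tensor_induced f g l1 = tensor_induced f g l2 ->
                 tensor_eqv phi psi l1 l2).

(* Main.v *)
Require Import Defs.
From HB Require Import structures.
From mathcomp Require Import all_boot all_order all_algebra.
From mathcomp Require Import boolp.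
From mathcomp.algebra_tactics Require Import ring.
Set Implicit Arguments. Unset Strict Implicit. Unset Printing Implicit Defensive.
Import Order.TTheory GRing.Theory Num.Theory.
Local Open Scope ring_scope.

Section FS.
Variables A B : comPzRingType.
Local Notation fs := (fsum A B).

Definition key (p : int * A * B) : A * B := (p.1.2, p.2).

Definition W (Z : zmodType) (h : A -> B -> Z) (l : fs) : Z :=
  \sum_(p <- l) h p.1.2 p.2 *~ p.1.1.

Lemma W_ext (Z : zmodType) (h h' : A -> B -> Z) l :
  (forall x y, h x y = h' x y) -> W h l = W h' l.
Proof. by move=> e; apply: eq_bigr => p _; rewrite e. Qed.

Lemma W_nil (Z : zmodType) (h : A -> B -> Z) : W h [::] = 0.
Proof. by rewrite /W big_nil. Qed.

Lemma W_cons (Z : zmodType) (h : A -> B -> Z) p l :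
  W h (p :: l) = h p.1.2 p.2 *~ p.1.1 + W h l.
Proof. by rewrite /W big_cons. Qed.

Lemma W_cat (Z : zmodType) (h : A -> B -> Z) l m : W h (l ++ m) = W h l + W h m.
Proof. by rewrite /W big_cat. Qed.

Lemma W_scale (Z : zmodType) (h : A -> B -> Z) n l :
  W h (fscale n l) = W h l *~ n.
Proof.
rewrite /W /fscale big_map mulrz_suml; apply: eq_bigr => p _ /=.
by rewrite mulrC mulrzA.
Qed.

Lemma W_flatten (Z : zmodType) (h : A -> B -> Z) (L : seq fs) :
  W h (flatten L) = \sum_(l <- L) W h l.
Proof.
elim: L => [|l L IH]; first by rewrite big_nil W_nil.
by rewrite /= W_cat IH big_cons.
Qed.

Definition ind (a : A) (b : B) (x : A) (y : B) : int := ((x == a) && (y == b))%:R.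

Lemma fcoef_W l a b : fcoef l a b = W (ind a b) l.
Proof.
rewrite /fcoef /W big_mkcond; apply: eq_bigr => p _ /=.
rewrite /ind; case: ifP => _; first by rewrite intz.
by rewrite mul0rz.
Qed.

Lemma fcoefE l a b : fcoef l a b = \sum_(p <- l | key p == (a, b)) p.1.1.
Proof. by apply: eq_bigl => p; rewrite /key xpair_eqE. Qed.

Lemma W_supp (Z : zmodType) (h : A -> B -> Z) l (S : seq (A * B)) :
  uniq S -> {subset map key l <= S} ->
  W h l = \sum_(x <- S) h x.1 x.2 *~ fcoef l x.1 x.2.
Proof.
move=> uS sub.
have -> : \sum_(x <- S) h x.1 x.2 *~ fcoef l x.1 x.2 =
   \sum_(x <- S) \sum_(p <- l) (if key p == x then h x.1 x.2 *~ p.1.1 else 0).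
  apply: eq_bigr => x _; rewrite fcoefE -surjective_pairing mulrz_sumr big_mkcond.
  by apply: eq_bigr => p _; case: ifP.
rewrite exchange_big /W; apply: eq_big_seq => p pl.
have pS : key p \in S by apply: (sub (key p)); apply: map_f.
rewrite (bigD1_seq (key p) pS uS) /= eqxx big1 ?addr0 //.
by move=> x; rewrite eq_sym => /negbTE ->.
Qed.

Definition fe (l m : fs) := forall a b, fcoef l a b = fcoef m a b.

Lemma W_fe (Z : zmodType) (h : A -> B -> Z) l m : fe l m -> W h l = W h m.
Proof.
move=> e; set S := undup (map key (l ++ m)).
have uS : uniq S by apply: undup_uniq.
rewrite (W_supp h uS) ?(W_supp h (l := m) uS).
- by apply: eq_bigr => x _; rewrite e.
- by move=> x xm; rewrite mem_undup map_cat mem_cat xm orbT.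
- by move=> x xl; rewrite mem_undup map_cat mem_cat xl.
Qed.

Definition mulp (p q : int * A * B) : int * A * B :=
  (p.1.1 * q.1.1, p.1.2 * q.1.2, p.2 * q.2).

Definition mull (l m : fs) : fs := flatten [seq [seq mulp p q | q <- m] | p <- l].

Lemma W_mull (Z : zmodType) (h : A -> B -> Z) l m :
  W h (mull l m) = \sum_(p <- l) \sum_(q <- m)
     h (p.1.2 * q.1.2) (p.2 * q.2) *~ (p.1.1 * q.1.1).
Proof.
rewrite /mull W_flatten big_map; apply: eq_bigr => p _.
by rewrite /W big_map.
Qed.

Lemma W_mull_l (Z : zmodType) (h : A -> B -> Z) l m :
  W h (mull l m) = W (fun x y => \sum_(q <- m) h (x * q.1.2) (y * q.2) *~ q.1.1) l.
Proof.
rewrite W_mull /W; apply: eq_bigr => p _; rewrite mulrz_suml.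
by apply: eq_bigr => q _; rewrite [p.1.1 * _]mulrC mulrzA.
Qed.

Lemma W_mull_r (Z : zmodType) (h : A -> B -> Z) l m :
  W h (mull l m) = W (fun x y => \sum_(p <- l) h (p.1.2 * x) (p.2 * y) *~ p.1.1) m.
Proof.
rewrite W_mull exchange_big /W; apply: eq_bigr => q _; rewrite mulrz_suml.
by apply: eq_bigr => p _; rewrite mulrzA.
Qed.

Lemma mull_cat l l' m : mull (l ++ l') m = mull l m ++ mull l' m.
Proof. by rewrite /mull map_cat flatten_cat. Qed.

Lemma fe_W l m : (forall (h : A -> B -> int), W h l = W h m) -> fe l m.
Proof. by move=> e a b; rewrite !fcoef_W e. Qed.


Lemma W_mulp_comm l m : fe (mull l m) (mull m l).
Proof.
apply: fe_W => h; rewrite !W_mull exchange_big; apply: eq_bigr => q _.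
by apply: eq_bigr => p _; rewrite [q.1.2 * _]mulrC [q.2 * _]mulrC [q.1.1 * _]mulrC.
Qed.

Lemma fe_mullA l m k : fe (mull (mull l m) k) (mull l (mull m k)).
Proof.
apply: fe_W => h; rewrite !W_mull_l; apply: W_ext => x y.
have := W_mull_l (fun u v => h (x * u) (y * v)) m k; rewrite /W /= => ->.
apply: eq_bigr => q _; congr (_ *~ _); apply: eq_bigr => r _.
by rewrite !mulrA.
Qed.

End FS.

Section Tens.
Variables (R A B : comPzRingType) (phi : R -> A) (psi : R -> B).
Local Notation fs := (fsum A B).
Local Notation eqv := (tensor_eqv phi psi).

Definition rels (rs : seq (int * fs)) : fs := flatten [seq fscale p.1 p.2 | p <- rs].
Definition good (rs : seq (int * fs)) := forall p, p \in rs -> is_tensor_rel phi psi p.2.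

Lemma W_rels (Z : zmodType) (h : A -> B -> Z) rs :
  W h (rels rs) = \sum_(p <- rs) W h p.2 *~ p.1.
Proof. by rewrite /rels W_flatten big_map; apply: eq_bigr => p _; rewrite W_scale. Qed.

Lemma rels_cat r1 r2 : rels (r1 ++ r2) = rels r1 ++ rels r2.
Proof. by rewrite /rels map_cat flatten_cat. Qed.

Lemma good_cat r1 r2 : good r1 -> good r2 -> good (r1 ++ r2).
Proof. by move=> g1 g2 p; rewrite mem_cat => /orP [] ?; [apply: g1 | apply: g2]. Qed.

Lemma eqvP l1 l2 : eqv l1 l2 <-> exists rs, good rs /\ fe l1 (l2 ++ rels rs).
Proof.
split=> [[rs [g e]]|[rs [g e]]]; exists rs; split=> // a b; move: (e a b);
  rewrite !fcoef_W W_cat.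
  by move=> <-; rewrite addrC subrK.
by move=> ->; rewrite addrC addKr.
Qed.

Lemma eqv_fe l1 l2 : fe l1 l2 -> eqv l1 l2.
Proof. by move=> e; apply/(iffRL (eqvP _ _)); exists [::]; split=> // a b; rewrite cats0. Qed.

Lemma eqv_refl l : eqv l l.
Proof. by apply: eqv_fe. Qed.

Lemma eqv_sym l1 l2 : eqv l1 l2 -> eqv l2 l1.
Proof.
move=> /(iffLR (eqvP _ _)) [rs [g e]]; apply/(iffRL (eqvP _ _)); exists [seq (- p.1, p.2) | p <- rs]; split.
  by move=> p /mapP [q qin ->]; exact: (g q qin).
apply: fe_W => h; rewrite W_cat (W_fe h e) W_cat !W_rels big_map /=.
under [X in _ = _ + X]eq_bigr do rewrite mulrNz.
by rewrite sumrN addrK.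
Qed.

Lemma eqv_trans l1 l2 l3 : eqv l1 l2 -> eqv l2 l3 -> eqv l1 l3.
Proof.
move=> /(iffLR (eqvP _ _)) [r1 [g1 e1]] /(iffLR (eqvP _ _)) [r2 [g2 e2]]; apply/(iffRL (eqvP _ _)); exists (r2 ++ r1); split.
  exact: good_cat.
apply: fe_W => h; rewrite (W_fe h e1) W_cat (W_fe h e2) rels_cat !W_cat.
by rewrite addrA.
Qed.

Lemma eqv_cat l l' m m' : eqv l l' -> eqv m m' -> eqv (l ++ m) (l' ++ m').
Proof.
move=> /(iffLR (eqvP _ _)) [r1 [g1 e1]] /(iffLR (eqvP _ _)) [r2 [g2 e2]]; apply/(iffRL (eqvP _ _)); exists (r1 ++ r2); split.
  exact: good_cat.
apply: fe_W => h; rewrite W_cat (W_fe h e1) (W_fe h e2) rels_cat !W_cat.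
by rewrite addrACA.
Qed.

Lemma eqv_scale n l l' : eqv l l' -> eqv (fscale n l) (fscale n l').
Proof.
move=> /(iffLR (eqvP _ _)) [rs [g e]]; apply/(iffRL (eqvP _ _)); exists [seq (p.1 * n, p.2) | p <- rs]; split.
  by move=> p /mapP [q qin ->]; exact: (g q qin).
apply: fe_W => h; rewrite W_scale (W_fe h e) !W_cat W_scale !W_rels big_map /=.
rewrite mulrzDl; congr (_ + _); rewrite mulrz_suml; apply: eq_bigr => p _.
by rewrite mulrzA.
Qed.

Definition relmul (r : fs) (q : int * A * B) : fs :=
  [seq (u.1.1, u.1.2 * q.1.2, u.2 * q.2) | u <- r].

Lemma rel_relmul r q : is_tensor_rel phi psi r -> is_tensor_rel phi psi (relmul r q).
Proof.
case=> [[a [a' [b ->]]] | [[a [b [b' ->]]] | [r0 [a [b ->]]]]].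
- by left; exists (a * q.1.2), (a' * q.1.2), (b * q.2); rewrite /relmul /= mulrDl.
- by right; left; exists (a * q.1.2), (b * q.2), (b' * q.2); rewrite /relmul /= mulrDl.
- by right; right; exists r0, (a * q.1.2), (b * q.2); rewrite /relmul /= !mulrA.
Qed.

Lemma eqv_mull_l l l' m : eqv l l' -> eqv (mull l m) (mull l' m).
Proof.
move=> /(iffLR (eqvP _ _)) [rs [g e]]; apply/(iffRL (eqvP _ _)).
exists (flatten [seq [seq (p.1 * q.1.1, relmul p.2 q) | q <- m] | p <- rs]); split.
  move=> x /flattenP [s /mapP [p pin ->] /mapP [q qin ->]] /=.
  by apply: rel_relmul; exact: (g p pin).
apply: fe_W => h; rewrite W_mull_l (W_fe _ e) -W_mull_l mull_cat !W_cat; congr (_ + _).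
rewrite W_mull_l !W_rels /rels big_flatten /= big_map; apply: eq_bigr => p _.
rewrite big_map /=.
under [RHS]eq_bigr do rewrite /W big_map mulrz_suml.
rewrite exchange_big /W mulrz_suml; apply: eq_bigr => u _ /=.
rewrite !mulrz_suml; apply: eq_bigr => q _ /=.
by rewrite -!mulrzA; congr (_ *~ _); ring.
Qed.

Lemma eqv_mull l l' m m' : eqv l l' -> eqv m m' -> eqv (mull l m) (mull l' m').
Proof.
move=> e1 e2; apply: (eqv_trans (eqv_mull_l m e1)).
apply: (eqv_trans (eqv_fe (W_mulp_comm _ _))).
apply: (eqv_trans (eqv_mull_l l' e2)).
exact: (eqv_fe (W_mulp_comm _ _)).
Qed.

End Tens.

Section Quot.
Variables (R A B : comPzRingType) (phi : R -> A) (psi : R -> B).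
Local Notation fs := (fsum A B).
Local Notation eqv := (tensor_eqv phi psi).
Local Open Scope quotient_scope.

Definition eqvb (l m : fs) : bool := `[< eqv l m >].

Lemma eqvb_refl : reflexive eqvb.
Proof. by move=> l; apply/asboolP; apply: eqv_refl. Qed.
Lemma eqvb_sym : symmetric eqvb.
Proof.
by move=> l m; apply/idP/idP => /asboolP H; apply/asboolP; apply: eqv_sym.
Qed.
Lemma eqvb_trans : transitive eqvb.
Proof.
by move=> m l k /asboolP H1 /asboolP H2; apply/asboolP; apply: (eqv_trans H1 H2).
Qed.

Definition eqv_rel := EquivRel eqvb eqvb_refl eqvb_sym eqvb_trans.

Definition tens := {eq_quot eqv_rel}.
HB.instance Definition _ := Choice.on tens.
HB.instance Definition _ := Quotient.on tens.

Lemma piP (l m : fs) : \pi_tens l = \pi_tens m <-> eqv l m.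
Proof.
split=> [/eqquotP/asboolP //| H]; apply/eqquotP; exact/asboolP.
Qed.

Lemma repr_pi (l : fs) : eqv (repr (\pi_tens l)) l.
Proof. by apply/(iffLR (piP _ _)); rewrite reprK. Qed.

Lemma pi_fe (l m : fs) : fe l m -> \pi_tens l = \pi_tens m.
Proof. by move=> e; apply/(iffRL (piP _ _)); apply: eqv_fe. Qed.

Definition tzero : tens := \pi_tens [::].
Definition tadd (x y : tens) : tens := \pi_tens (repr x ++ repr y).
Definition topp (x : tens) : tens := \pi_tens (fscale (-1) (repr x)).
Definition tone : tens := \pi_tens [:: (1, 1, 1)].
Definition tmul (x y : tens) : tens := \pi_tens (mull (repr x) (repr y)).

Lemma tadd_pi l m : tadd (\pi_tens l) (\pi_tens m) = \pi_tens (l ++ m).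
Proof. by apply/(iffRL (piP _ _)); apply: eqv_cat; apply: repr_pi. Qed.
Lemma topp_pi l : topp (\pi_tens l) = \pi_tens (fscale (-1) l).
Proof. by apply/(iffRL (piP _ _)); apply: eqv_scale; apply: repr_pi. Qed.
Lemma tmul_pi l m : tmul (\pi_tens l) (\pi_tens m) = \pi_tens (mull l m).
Proof. by apply/(iffRL (piP _ _)); apply: eqv_mull; apply: repr_pi. Qed.

Lemma taddA : associative tadd.
Proof. by move=> x y z; elim/quotW: x => x; elim/quotW: y => y; elim/quotW: z => z; rewrite (tadd_pi y z) (tadd_pi x y) !tadd_pi catA. Qed.
Lemma taddC : commutative tadd.
Proof.
move=> x y; elim/quotW: x => x; elim/quotW: y => y; rewrite !tadd_pi; apply: pi_fe.
by apply: fe_W => h; rewrite !W_cat addrC.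
Qed.
Lemma tadd0 : left_id tzero tadd.
Proof. by move=> x; elim/quotW: x => x; rewrite /tzero tadd_pi. Qed.
Lemma taddN : left_inverse tzero topp tadd.
Proof.
move=> x; elim/quotW: x => x; rewrite topp_pi tadd_pi; apply: pi_fe.
by apply: fe_W => h; rewrite W_cat W_scale mulrN1z addNr W_nil.
Qed.

HB.instance Definition _ := GRing.isZmodule.Build tens taddA taddC tadd0 taddN.

Lemma tmulA : associative tmul.
Proof.
move=> x y z; elim/quotW: x => x; elim/quotW: y => y; elim/quotW: z => z; rewrite (tmul_pi y z) (tmul_pi x y) !tmul_pi.
by apply: esym; apply: pi_fe; apply: fe_mullA.
Qed.
Lemma tmulC : commutative tmul.
Proof.
by move=> x y; elim/quotW: x => x; elim/quotW: y => y; rewrite !tmul_pi; apply: pi_fe; apply: W_mulp_comm.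
Qed.
Lemma tmul1 : left_id tone tmul.
Proof.
move=> x; elim/quotW: x => x; rewrite /tone tmul_pi; apply: pi_fe.
apply: fe_W => h; rewrite W_mull big_seq1; apply: eq_bigr => q _.
by rewrite !mul1r.
Qed.
Lemma tmulDl : left_distributive tmul tadd.
Proof.
by move=> x y z; elim/quotW: x => x; elim/quotW: y => y; elim/quotW: z => z; rewrite (tadd_pi x y) (tmul_pi x z) (tmul_pi y z) !tmul_pi tadd_pi mull_cat.
Qed.

HB.instance Definition _ := GRing.Zmodule_isComPzRing.Build tens tmulA tmulC tmul1 tmulDl.

End Quot.

From Stdlib Require Import Classical FunctionalExtensionality PropExtensionality.

Section Ind.
Variable X : comPzRingType.

Definition ind_open (U : X -> Prop) := (forall x, U x) \/ (forall x, ~ U x).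

Lemma ind_full U z : ind_open U -> U z -> forall x, U x.
Proof. by case=> // H /H. Qed.

Lemma ind_open_full : ind_open (fun _ => True).
Proof. by left. Qed.

Lemma ind_open_union (F : (X -> Prop) -> Prop) :
  (forall U, F U -> ind_open U) -> ind_open (fun x => exists U, F U /\ U x).
Proof.
move=> H; case: (classic (exists U, F U /\ forall x, U x)) => [[U [FU HU]]|N].
  by left=> x; exists U.
right=> x [U [FU Ux]]; case: (H U FU) => [HU|HU]; last exact: (HU x).
by apply: N; exists U.
Qed.

Lemma ind_open_inter U V : ind_open U -> ind_open V -> ind_open (fun x => U x /\ V x).
Proof.
case=> HU; last by right=> x [/HU].
case=> HV; last by right=> x [_ /HV].
by left.
Qed.

Lemma ind_cont2 (op : X -> X -> X) (x y : X) U : ind_open U -> U (op x y) ->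
  exists V W, [/\ ind_open V, ind_open W, V x, W y &
                   forall v w, V v -> W w -> U (op v w)].
Proof.
move=> oU Uxy; have F := ind_full oU Uxy.
by exists (fun _ => True), (fun _ => True); split=> //; left.
Qed.

Lemma ind_cont1 (op : X -> X) (x : X) U : ind_open U -> U (op x) ->
  exists V, [/\ ind_open V, V x & forall v, V v -> U (op v)].
Proof.
move=> oU Ux; have F := ind_full oU Ux.
by exists (fun _ => True); split=> //; left.
Qed.

Definition indTop : TopRing :=
  {| tr_car := X; tr_open := ind_open; tr_open_full := ind_open_full;
     tr_open_union := ind_open_union; tr_open_inter := ind_open_inter;
     tr_add_cont := @ind_cont2 +%R; tr_opp_cont := @ind_cont1 -%R;
     tr_mul_cont := @ind_cont2 *%R |}.

Lemma ind_continuous (Y : TopRing) (h : Y -> indTop) : is_continuous h.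
Proof.
move=> U [HU|HU].
  have -> : (fun x => U (h x)) = (fun _ => True).
    by apply: functional_extensionality => x; apply: propositional_extensionality; split.
  exact: tr_open_full.
have -> : (fun x => U (h x)) = (fun x => exists V, (fun _ : Y -> Prop => False) V /\ V x).
  by apply: functional_extensionality => x; apply: propositional_extensionality; split=> [/HU|[? []]].
by apply: tr_open_union => ? [].
Qed.

Lemma ind_fadic : is_fadic indTop.
Proof.
exists (fun _ => True), [:: 1]; split=> //.
- by left.
- move=> n; exists (fun _ => True); split=> //; first by left.
  move=> x _; exists [:: (x, 1)]; split; last by rewrite big_seq1 mulr1.
  move=> p; rewrite inE => /eqP -> /=; split=> //.
  exists (nseq n 1); split; first by rewrite size_nseq.
    by move=> y; rewrite mem_nseq => /andP [_ /eqP ->]; rewrite inE.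
  by rewrite big1_seq // => y /andP [_]; rewrite mem_nseq => /andP [_ /eqP ->].
- by move=> U oU U0; exists 0%N => x _; apply: (ind_full oU U0).
Qed.

Lemma ind_inCat b : inCat b indTop.
Proof. by case: b => //=; apply: ind_fadic. Qed.

End Ind.

Section Tens2.
Variables (R A B : comPzRingType) (phi : R -> A) (psi : R -> B).
Local Notation fs := (fsum A B).
Local Notation eqv := (tensor_eqv phi psi).
Local Open Scope quotient_scope.
Local Notation TT := (tens phi psi).
Local Notation pi := (\pi_TT).

Lemma pi_scale_nat (k : nat) (l : fs) : pi (fscale k%:Z l) = pi l *+ k.
Proof.
elim: k => [|k IH].
  by rewrite mulr0n; apply: pi_fe; apply: fe_W => h; rewrite W_scale mulr0z W_nil.
rewrite mulrS -IH; rewrite -[_ + _]/(tadd _ _) tadd_pi; apply: pi_fe; apply: fe_W => h.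
rewrite W_cat !W_scale; change (W h l *+ k.+1 = W h l + W h l *+ k); exact: mulrS.
Qed.

Lemma pi_scale (n : int) (l : fs) : pi (fscale n l) = pi l *~ n.
Proof.
case: n => k; first exact: pi_scale_nat.
rewrite NegzE mulrNz -[pi l *~ _]/(pi l *+ k.+1) -pi_scale_nat -[- pi _]/(topp _) topp_pi; apply: pi_fe; apply: fe_W => h.
by rewrite !W_scale -mulrzA mulrN1.
Qed.

Lemma piW (l : fs) : pi l = W (fun a b => pi [:: (1, a, b)]) l.
Proof.
elim: l => [|p l IH]; first by rewrite W_nil.
rewrite W_cons -IH -pi_scale -[_ + _]/(tadd _ _) tadd_pi; apply: pi_fe; apply: fe_W => h.
by rewrite /= !W_cons /= mulr1.
Qed.

Lemma eqv_rel1 l1 l2 r : is_tensor_rel phi psi r ->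
  (forall h : A -> B -> int, W h l1 = W h l2 + W h r) -> eqv l1 l2.
Proof.
move=> Hr e; apply/(iffRL (eqvP _ _ _ _)); exists [:: (1, r)]; split.
  by move=> p; rewrite inE => /eqP ->.
apply: fe_W => h; rewrite W_cat W_rels big_seq1 mulr1z; exact: e.
Qed.

Definition emb1 (a : A) : TT := pi [:: (1, a, 1)].
Definition emb2 (b : B) : TT := pi [:: (1, 1, b)].

Lemma emb_mul a b : emb1 a * emb2 b = pi [:: (1, a, b)].
Proof.
rewrite -[_ * _]/(tmul _ _) tmul_pi; apply: pi_fe; apply: fe_W => h.
by rewrite W_mull !big_seq1 /W !big_seq1 /= mulr1 mul1r mulr1.
Qed.

Lemma emb1_hom : is_ringhom emb1.
Proof.
split=> //.
- move=> x y; rewrite /emb1 /emb2 -[pi _ + pi _]/(tadd _ _) tadd_pi; apply/(iffRL (piP _ _ _ _)).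
  apply: (@eqv_rel1 _ _ [:: (1, x + y, 1); (-1, x, 1); (-1, y, 1)]).
    by left; exists x, y, 1.
  by move=> h; rewrite /W !big_cons !big_nil /= !mulrzz; ring.
- move=> x y; rewrite /emb1 /emb2 -[pi _ * pi _]/(tmul _ _) tmul_pi; apply: pi_fe; apply: fe_W => h.
  by rewrite W_mull !big_seq1 /W !big_seq1 /= mulr1 mulr1.
Qed.

Lemma emb2_hom : is_ringhom emb2.
Proof.
split=> //.
- move=> x y; rewrite /emb1 /emb2 -[pi _ + pi _]/(tadd _ _) tadd_pi; apply/(iffRL (piP _ _ _ _)).
  apply: (@eqv_rel1 _ _ [:: (1, 1, x + y); (-1, 1, x); (-1, 1, y)]).
    by right; left; exists 1, x, y.
  by move=> h; rewrite /W !big_cons !big_nil /= !mulrzz; ring.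
- move=> x y; rewrite /emb1 /emb2 -[pi _ * pi _]/(tmul _ _) tmul_pi; apply: pi_fe; apply: fe_W => h.
  by rewrite W_mull !big_seq1 /W !big_seq1 /= mulr1 mulr1.
Qed.

Lemma emb_comm r : emb1 (phi r) = emb2 (psi r).
Proof.
apply/(iffRL (piP _ _ _ _)).
apply: (@eqv_rel1 _ _ [:: (1, phi r * 1, 1); (-1, 1, psi r * 1)]).
  by right; right; exists r, 1, 1.
by move=> h; rewrite /W !big_cons !big_nil /= !mulr1 !mulrzz; ring.
Qed.

End Tens2.

Section Hom.
Variables (X Y : comPzRingType) (th : X -> Y) (hth : is_ringhom th).

Lemma th0 : th 0 = 0.
Proof.
case: hth => _ hadd _; apply: (addrI (th 0)); by rewrite -hadd !addr0.
Qed.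

Lemma thN x : th (- x) = - th x.
Proof.
case: hth => _ hadd _; apply: (addrI (th x)); by rewrite -hadd !subrr th0.
Qed.

Lemma thMn x k : th (x *+ k) = th x *+ k.
Proof.
case: hth => _ hadd _; elim: k => [|k IH]; first by rewrite !mulr0n th0.
by rewrite !mulrS hadd IH.
Qed.

Lemma thMz x n : th (x *~ n) = th x *~ n.
Proof.
case: n => k; first exact: thMn.
by rewrite !NegzE !mulrNz thN -[x *~ _]/(x *+ k.+1) thMn.
Qed.

Lemma thW (A B : comPzRingType) (h : A -> B -> X) l :
  th (W h l) = W (fun a b => th (h a b)) l.
Proof.
case: hth => _ hadd _; elim: l => [|p l IH]; first by rewrite !W_nil th0.
by rewrite !W_cons hadd thMz IH.
Qed.

End Hom.

Section Phi.
Variables (R A B T : comPzRingType) (phi : R -> A) (psi : R -> B).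
Variables (f : A -> T) (g : B -> T).
Hypotheses (fh : is_ringhom f) (gh : is_ringhom g) (comm : forall r, f (phi r) = g (psi r)).
Local Open Scope quotient_scope.
Local Notation TT := (tens phi psi).
Local Notation pi := (\pi_TT).

Lemma Phi_W l : tensor_induced f g l = W (fun a b => f a * g b) l.
Proof. by []. Qed.

Lemma Phi_rel r : is_tensor_rel phi psi r -> W (fun a b => f a * g b) r = 0.
Proof.
case: fh => _ fadd fmul; case: gh => _ gadd gmul.
case=> [[a [a' [b ->]]] | [[a [b [b' ->]]] | [r0 [a [b ->]]]]];
  rewrite /W !big_cons big_nil /= !mulr1z !mulrN1z.
- by rewrite fadd; ring.
- by rewrite gadd; ring.
- by rewrite fmul gmul comm; ring.
Qed.

Lemma Phi_eqv l m : tensor_eqv phi psi l m -> tensor_induced f g l = tensor_induced f g m.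
Proof.
move=> /(iffLR (eqvP _ _ _ _)) [rs [gd e]].
rewrite !Phi_W (W_fe _ e) W_cat W_rels big_seq big1 ?addr0 // => p pin.
by rewrite Phi_rel ?mul0rz //; apply: gd.
Qed.

Definition Psi (x : TT) : T := tensor_induced f g (repr x).

Lemma Psi_pi l : Psi (pi l) = tensor_induced f g l.
Proof. by apply: Phi_eqv; apply: repr_pi. Qed.

Lemma Psi_hom : is_ringhom Psi.
Proof.
case: fh => f1 fadd fmul; case: gh => g1 gadd gmul.
split.
- by rewrite -[1]/(pi [:: (1, 1, 1)]) Psi_pi Phi_W /W big_seq1 /= f1 g1 mulr1 mulr1z.
- move=> x y; elim/quotW: x => x; elim/quotW: y => y.
  by rewrite -[pi x + pi y]/(tadd _ _) tadd_pi !Psi_pi !Phi_W W_cat.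
- move=> x y; elim/quotW: x => x; elim/quotW: y => y.
  rewrite -[pi x * pi y]/(tmul _ _) tmul_pi !Psi_pi !Phi_W W_mull /W mulr_suml.
  apply: eq_bigr => p _; rewrite mulrzAl mulr_sumr mulrz_suml; apply: eq_bigr => q _.
  rewrite mulrzAr fmul gmul -mulrzA [q.1.1 * _]mulrC; congr (_ *~ _); ring.
Qed.

End Phi.

Theorem mainTheorem11 (fadic_only : bool) (R A B : TopRing)
  (phi : R -> A) (psi : R -> B) (T : TopRing) (f : A -> T) (g : B -> T) :
  inCat fadic_only R -> inCat fadic_only A -> inCat fadic_only B ->
  is_arrow phi -> is_arrow psi ->
  is_pushout fadic_only phi psi f g ->
  tensor_induced_bijective phi psi f g.
Proof.
move=> _ _ _ _ _ [_ [fh _] [gh _] comm UP].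
pose C := indTop (tens phi psi).
have [[theta [[thh _] thf thg]] _] :=
  UP C (emb1 phi psi : A -> C) (emb2 phi psi : B -> C) (ind_inCat _ _)
     (conj (emb1_hom phi psi) (@ind_continuous _ _ _))
     (conj (emb2_hom phi psi) (@ind_continuous _ _ _)) (emb_comm phi psi).
split.
- move=> t; exists (repr (theta t : tens phi psi)).
  pose C2 := indTop T.
  have [_ uniq] := UP C2 (f : A -> C2) (g : B -> C2) (ind_inCat _ _)
     (conj fh (@ind_continuous _ _ _)) (conj gh (@ind_continuous _ _ _)) comm.
  have Ph := Psi_hom fh gh comm.
  case: (Ph) => P1 Padd Pmul; case: (thh) => t1 tadd' tmul'.
  case: (fh) => f1 _ _; case: (gh) => g1 _ _.
  apply: esym; apply: (uniq (fun x => x) (fun x => Psi f g (theta x : tens phi psi))).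
  - by split=> //; apply: ind_continuous.
  - by [].
  - by [].
  - split; last by apply: ind_continuous.
    split.
    + by rewrite /= t1 P1.
    + by move=> x y; rewrite /= tadd' Padd.
    + by move=> x y; rewrite /= tmul' Pmul.
  - move=> a /=; rewrite -thf /emb1 Psi_pi //.
    by rewrite Phi_W /W big_seq1 /= g1 mulr1 mulr1z.
  - move=> b /=; rewrite -thg /emb2 Psi_pi //.
    by rewrite Phi_W /W big_seq1 /= f1 mul1r mulr1z.
- move=> l1 l2 e.
  have key l : (theta (tensor_induced f g l) : tens phi psi) = (\pi_(tens phi psi) l)%qT.
    rewrite Phi_W (thW thh) (piW phi psi l); apply: W_ext => a b.
    case: fh => _ _ fmul; case: thh => _ _ tmul.
    by rewrite tmul -thf -thg emb_mul.
  by apply/(iffLR (piP _ _ _ _)); rewrite -!key e.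
Qed.
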